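(* Let $r\ge3$ and let $\mathscr{G}_N$ be a uniformly random $r$-regular (simple) graph on vertex set $[N]$, $N\in2\mathbb{N}$, with law $\mathbf{P}$. Let $\ell=\ell(N)$ be integers with $\ell<\log_{r-1}(5N)$. Call a vertex $x\in[N]$ $\ell$-good if its $\ell$-neighbourhood $B_\ell(x;\mathscr{G}_N)$ is isomorphic as a rooted graph to the $\ell$-neighbourhood $B_\ell(o;\mathscr T)$ of the root $o$ in the infinite $r$-regular tree $\mathscr T$, and $\ell$-bad otherwise; let $\mathrm{bad}^N_\ell$ be the set of $\ell$-bad vertices. Then there exists a constant $K_2<\infty$ such that for all $z>0$, \[ \mathbf{P}\big(|\mathrm{bad}^N_\ell|\ge r^2(r-1)^{2\ell-2}z\big)\le\frac{K_2}{z}. \] *)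

(* Defs.v *)
From mathcomp Require Import all_boot all_order all_algebra.
From mathcomp Require Import boolp reals.
Set Implicit Arguments. Unset Strict Implicit. Unset Printing Implicit Defensive.
Import Order.TTheory GRing.Theory Num.Theory.

Definition graph (N : nat) := {ffun 'I_N -> {set 'I_N}}.

Definition rreg (N r : nat) (g : graph N) : bool :=
  [forall x, (x \notin g x) && (#|g x| == r)] &&
  [forall x, forall y, (y \in g x) == (x \in g y)].

Definition grow N (g : graph N) (A : {set 'I_N}) : {set 'I_N} :=
  A :|: [set y | [exists a in A, y \in g a]].
Definition ball N (g : graph N) (l : nat) (x : 'I_N) : {set 'I_N} :=
  iter l (grow g) [set x].

(* The infinite r-regular tree T: vertices are words [a1;...;ak] with a1 < r
   and ai < r-1 (i >= 2); root o = [::]; edges join a word to its one-letter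
   extensions. The distance from o of w is size w. *)
Definition tvalid (r : nat) (w : seq nat) : bool :=
  if w is a :: t then (a < r) && all (fun b => b < r.-1) t else true.
Definition tchild (u v : seq nat) : bool :=
  (size v == (size u).+1) && (take (size u) v == u).
Definition tadj (u v : seq nat) : bool := tchild u v || tchild v u.

(* B_l(x;g) isomorphic as a rooted graph (induced subgraphs) to B_l(o;T) *)
Definition good N r (g : graph N) (l : nat) (x : 'I_N) : Prop :=
  exists f : 'I_N -> seq nat,
    [/\ f x = [::],
        {in ball g l x &, injective f},
        (forall y, y \in ball g l x -> tvalid r (f y) && (size (f y) <= l)),
        (forall w, tvalid r w -> size w <= l ->
           exists2 y, y \in ball g l x & f y = w) &
        {in ball g l x &, forall y z, (z \in g y) = tadj (f y) (f z)}].

Definition bad_set N r (g : graph N) (l : nat) : {set 'I_N} :=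
  [set x | `[< ~ good r g l x >]].

Definition Prob (R : realType) N r (E : graph N -> bool) : R :=
  (#|[set g : graph N | rreg r g && E g]|%:R / #|[set g : graph N | rreg r g]|%:R)%R.

(* Main.v *)
Require Import Defs.
From mathcomp Require Import all_boot all_order all_algebra.
From mathcomp Require Import boolp reals.
From mathcomp Require Import zify ring lra.
Import Order.TTheory GRing.Theory Num.Theory.
Set Implicit Arguments. Unset Strict Implicit. Unset Printing Implicit Defensive.

Section Basics.
Variables (N r : nat) (g : graph N).
Hypothesis hg : rreg r g.

Lemma rreg_loop x : x \notin g x.
Proof. by case/andP: hg => /forallP/(_ x)/andP[]. Qed.
Lemma rreg_card x : #|g x| = r.
Proof. by case/andP: hg => /forallP/(_ x)/andP[_ /eqP]. Qed.
Lemma rreg_sym x y : (y \in g x) = (x \in g y).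
Proof. by case/andP: hg => _ /forallP/(_ x)/forallP/(_ y)/eqP. Qed.
Lemma rreg_neq x y : y \in g x -> x != y.
Proof. by apply: contraTneq => ->; apply: rreg_loop. Qed.
End Basics.

Section Switch.
Variables (N r : nat).
Implicit Types g : graph N.

Definition sw g (u v a b : 'I_N) : graph N :=
  [ffun y => if y == u then g u :\ v :|: [set a]
             else if y == v then g v :\ u :|: [set b]
             else if y == a then g a :\ b :|: [set u]
             else if y == b then g b :\ a :|: [set v]
             else g y].

Definition rem4 (u v a b y z : 'I_N) :=
  [|| (y == u) && (z == v), (y == v) && (z == u), (y == a) && (z == b) |
      (y == b) && (z == a)].

Lemma sw_inE g u v a b y z : u != v -> u != a -> u != b -> v != a -> v != b -> a != b ->
  (z \in sw g u v a b y) = ((z \in g y) && ~~ rem4 u v a b y z) || rem4 u a v b y z.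
Proof.
move=> uv ua ub va vb ab; rewrite /rem4 ffunE.
have vu : v != u by rewrite eq_sym. have au : a != u by rewrite eq_sym.
have bu : b != u by rewrite eq_sym. have av : a != v by rewrite eq_sym.
have bv : b != v by rewrite eq_sym. have ba : b != a by rewrite eq_sym.
case: (y =P u) => [->|/eqP yu]; rewrite ?inE.
  rewrite ?eqxx ?(negbTE uv) ?(negbTE ua) ?(negbTE ub) /=.
  by case: (z \in g u); case: (z == v); case: (z == a).
rewrite ?(negbTE yu) /=.
case: (y =P v) => [->|/eqP yv]; rewrite ?inE.
  rewrite ?eqxx ?(negbTE vu) ?(negbTE va) ?(negbTE vb) /=.
  by case: (z \in g v); case: (z == u); case: (z == b).
rewrite ?(negbTE yv) /=.
case: (y =P a) => [->|/eqP ya]; rewrite ?inE.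
  rewrite ?eqxx ?(negbTE au) ?(negbTE av) ?(negbTE ab) /=.
  by case: (z \in g a); case: (z == u); case: (z == b).
rewrite ?(negbTE ya) /=.
case: (y =P b) => [->|/eqP yb]; rewrite ?inE.
  rewrite ?eqxx ?(negbTE bu) ?(negbTE bv) ?(negbTE ba) /=.
  by case: (z \in g b); case: (z == v); case: (z == a).
by rewrite ?(negbTE yb) /= ?andbT ?orbF.
Qed.
End Switch.

Section SwitchCount.
Variables (N r : nat) (P : seq ('I_N * 'I_N)) (u v : 'I_N).
Hypotheses (uvP : (u, v) \notin P) (vuP : (v, u) \notin P).
Implicit Types g : graph N.

Definition contP g (Q : seq ('I_N * 'I_N)) := all (fun e => e.2 \in g e.1) Q.

Definition Aset := [set g | [&& rreg r g, contP g P & v \in g u]].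
Definition Bset := [set g | [&& rreg r g, contP g P & v \notin g u]].

Definition valid g (ab : 'I_N * 'I_N) :=
  [&& ab.2 \in g ab.1, ab.1 \notin [set u; v] :|: g u,
      ab.2 \notin [set u; v] :|: g v, ab \notin P & (ab.2, ab.1) \notin P].

Lemma rem4C (a b c d y z : 'I_N) : rem4 a b c d y z = rem4 a b c d z y.
Proof.
rewrite /rem4; case: (y == a); case: (y == b); case: (y == c); case: (y == d);
case: (z == a); case: (z == b); case: (z == c); case: (z == d); by [].
Qed.

Lemma card_swap_set (S : {set 'I_N}) c d : c \in S -> d \notin S -> #|S| = r ->
  #|S :\ c :|: [set d]| = r.
Proof.
move=> cS dS <-; rewrite setUC cardsU1 (cardsD1 c S) cS.
by have -> : d \notin S :\ c by rewrite inE negb_and dS orbT.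
Qed.

Section Facts.
Variables (g : graph N) (a b : 'I_N).
Hypotheses (gA : g \in Aset) (vab : valid g (a, b)).

Let hg : rreg r g. Proof. by move: gA; rewrite inE => /and3P[]. Qed.
Let guv : v \in g u. Proof. by move: gA; rewrite inE => /and3P[]. Qed.
Let gcP : contP g P. Proof. by move: gA; rewrite inE => /and3P[]. Qed.
Let gab : b \in g a. Proof. by case/and5P: vab. Qed.
Let aX : a \notin [set u; v] :|: g u. Proof. by case/and5P: vab. Qed.
Let bX : b \notin [set u; v] :|: g v. Proof. by case/and5P: vab. Qed.
Let abP : (a, b) \notin P. Proof. by case/and5P: vab. Qed.
Let baP : (b, a) \notin P. Proof. by case/and5P: vab. Qed.

Let uv : u != v. Proof. exact: rreg_neq hg _ _ guv. Qed.
Let ab : a != b. Proof. exact: rreg_neq hg _ _ gab. Qed.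
Let au : a != u. Proof. by move: aX; rewrite !inE; case: (a == u). Qed.
Let av : a != v. Proof. by move: aX; rewrite !inE; case: (a == v); rewrite ?orbT. Qed.
Let agu : a \notin g u. Proof. by move: aX; rewrite !inE negb_or => /andP[]. Qed.
Let bu : b != u. Proof. by move: bX; rewrite !inE; case: (b == u). Qed.
Let bv : b != v. Proof. by move: bX; rewrite !inE; case: (b == v); rewrite ?orbT. Qed.
Let bgv : b \notin g v. Proof. by move: bX; rewrite !inE negb_or => /andP[]. Qed.

Let ua : u != a. Proof. by rewrite eq_sym. Qed.
Let ub : u != b. Proof. by rewrite eq_sym. Qed.
Let va : v != a. Proof. by rewrite eq_sym. Qed.
Let vb : v != b. Proof. by rewrite eq_sym. Qed.

Lemma swE y z : (z \in sw g u v a b y) =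
  ((z \in g y) && ~~ rem4 u v a b y z) || rem4 u a v b y z.
Proof. exact: sw_inE. Qed.

Lemma rem_in y z : rem4 u v a b y z -> z \in g y.
Proof.
case/or4P=> /andP[/eqP-> /eqP->] //; by rewrite (rreg_sym hg).
Qed.

Lemma add_notin y z : rem4 u a v b y z -> z \notin g y.
Proof.
case/or4P=> /andP[/eqP-> /eqP->] //; by rewrite (rreg_sym hg).
Qed.

Lemma sw_B : sw g u v a b \in Bset.
Proof.
rewrite inE; apply/and3P; split.
- apply/andP; split; apply/forallP => y.
    apply/andP; split.
      rewrite swE (negbTE (rreg_loop hg y)) /=.
      rewrite /rem4; apply/negP; case/or4P=> /andP[/eqP e1 /eqP e2];
        move: e1 e2 => ->; apply/eqP; by [rewrite eq_sym|].
    rewrite ffunE; case: (y =P u) => [_|_].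
      by apply/eqP/card_swap_set => //; exact: rreg_card.
    case: (y =P v) => [_|_].
      apply/eqP/card_swap_set => //; last exact: rreg_card.
        by rewrite (rreg_sym hg).
    case: (y =P a) => [_|_].
      apply/eqP/card_swap_set => //; last exact: rreg_card.
      by rewrite (rreg_sym hg).
    case: (y =P b) => [_|_].
      apply/eqP/card_swap_set => //; last exact: rreg_card.
        by rewrite (rreg_sym hg).
      by rewrite (rreg_sym hg).
    by apply/eqP; exact: rreg_card.
  apply/forallP => z; apply/eqP.
  by rewrite !swE (rreg_sym hg) rem4C [rem4 u a v b y z]rem4C.
- apply/allP => e eP; rewrite swE.
  move/allP: gcP => /(_ e eP) -> /=.
  apply/orP; left; apply/negP; case/or4P=> /andP[/eqP e1 /eqP e2];
  move: eP; case: e e1 e2 => e1 e2 /= -> ->; apply/negP => //.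
- rewrite swE; apply/negP; case/orP.
    by rewrite /rem4 !eqxx /= => /andP[].
  rewrite /rem4 eqxx /= (negbTE va) (negbTE ua) (negbTE uv) (negbTE ub) /=.
  by [].
Qed.

Lemma sw_au : a \in sw g u v a b u.
Proof. by rewrite swE /rem4 !eqxx orbT. Qed.
Lemma sw_bv : b \in sw g u v a b v.
Proof. by rewrite swE /rem4 !eqxx !orbT. Qed.

End Facts.

Lemma sw_inj g1 g2 a b : g1 \in Aset -> g2 \in Aset -> valid g1 (a, b) -> valid g2 (a, b) ->
  sw g1 u v a b = sw g2 u v a b -> g1 = g2.
Proof.
move=> A1 A2 v1 v2 e; apply/ffunP => y; apply/setP => z.
case R1: (rem4 u v a b y z).
  by rewrite (rem_in A1 v1 R1) (rem_in A2 v2 R1).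
case R2: (rem4 u a v b y z).
  by rewrite (negbTE (add_notin A1 v1 R2)) (negbTE (add_notin A2 v2 R2)).
have := swE A1 v1 y z; rewrite e (swE A2 v2) R1 R2 /= !andbT !orbF.
by move->.
Qed.

End SwitchCount.

Lemma card_sum (T : finType) (p : pred T) : #|[set x | p x]| = \sum_x (p x : nat).
Proof. by rewrite -sum1_card big_mkcond; apply: eq_bigr => x _; rewrite inE; case: (p x). Qed.

Lemma card_pairset (T U : finType) (Q : T -> U -> bool) :
  #|[set x : T * U | Q x.1 x.2]| = \sum_t #|[set y | Q t y]|.
Proof.
rewrite card_sum -(pair_big xpredT xpredT (fun a b => (Q a b : nat))) /=.
by apply: eq_bigr => t _; rewrite card_sum.
Qed.

Section SwitchCount2.
Variables (N r : nat) (P : seq ('I_N * 'I_N)) (u v : 'I_N).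
Hypotheses (uvP : (u, v) \notin P) (vuP : (v, u) \notin P).

Lemma switch_count :
  \sum_(g in Aset r P u v) #|[set ab | valid P u v g ab]| <= r ^ 2 * #|Bset r P u v|.
Proof.
pose Pairs := [set x : graph N * ('I_N * 'I_N) | (x.1 \in Aset r P u v) && valid P u v x.1 x.2].
pose Target := [set x : graph N * ('I_N * 'I_N) |
   (x.1 \in Bset r P u v) && ((x.2.1 \in x.1 u) && (x.2.2 \in x.1 v))].
have -> : \sum_(g in Aset r P u v) #|[set ab | valid P u v g ab]| = #|Pairs|.
  rewrite /Pairs (card_pairset (fun g ab => (g \in Aset r P u v) && valid P u v g ab)) big_mkcond /=.
  apply: eq_bigr => g _.
  case: ifP => gA; first by apply: eq_card => ab; rewrite !inE ?gA.
  by apply/esym/eqP; rewrite cards_eq0; apply/eqP/setP => ab; rewrite !inE ?gA.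
have -> : r ^ 2 * #|Bset r P u v| = #|Target|.
  rewrite /Target (card_pairset (fun g ab => (g \in Bset r P u v) && ((ab.1 \in g u) && (ab.2 \in g v)))).
  rewrite -sum1_card big_distrr /= big_mkcond /=.
  apply: eq_bigr => g _; case: ifP => gB.
    have hg : rreg r g by move: gB; rewrite inE => /and3P[].
    rewrite muln1 (_ : [set y | _] = setX (g u) (g v)); last first.
      by apply/setP => -[a b]; rewrite !inE ?gB.
    by rewrite cardsX !(rreg_card hg).
  by apply/esym/eqP; rewrite cards_eq0; apply/eqP/setP => ab; rewrite !inE.
pose F (x : graph N * ('I_N * 'I_N)) := (sw x.1 u v x.2.1 x.2.2, x.2).
rewrite -(card_in_imset (f := F)); last first.
  move=> [g1 [a1 b1]] [g2 [a2 b2]]; rewrite !inE /= => /andP[A1 V1] /andP[A2 V2] [e1 e2 e3].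
  subst a2 b2; congr (_, _).
  by apply: (@sw_inj N r P u v g1 g2 a1 b1) => //; rewrite inE.
apply: subset_leq_card; apply/subsetP => y /imsetP[[g [a b]]]; rewrite inE /= => /andP[gA vab] ->.
by rewrite inE /= (@sw_B N r P u v uvP vuP g a b gA vab) (@sw_au N r P u v g a b gA vab) (@sw_bv N r P u v g a b gA vab).
Qed.

Lemma valid_card g : g \in Aset r P u v ->
  r * N <= #|[set ab | valid P u v g ab]| + (2 * ((r + 2) * r) + 2 * size P).
Proof.
rewrite inE => /and3P[hg _ _].
pose D := [set ab : 'I_N * 'I_N | ab.2 \in g ab.1].
have [X1 eX1] : {X : {set 'I_N} | X = [set u; v] :|: g u} by exists ([set u; v] :|: g u).
have [X2 eX2] : {X : {set 'I_N} | X = [set u; v] :|: g v} by exists ([set u; v] :|: g v).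
pose F1 := [set ab : 'I_N * 'I_N | (ab.1 \in X1) && (ab.2 \in g ab.1)].
pose F2 := [set ab : 'I_N * 'I_N | (ab.2 \in X2) && (ab.2 \in g ab.1)].
pose F3 := [set ab : 'I_N * 'I_N | ab \in P].
pose F4 := [set ab : 'I_N * 'I_N | (ab.2, ab.1) \in P].
have cD : #|D| = r * N.
  rewrite /D (card_pairset (fun a b => b \in g a)) (eq_bigr (fun _ => r)); first by rewrite sum_nat_const card_ord mulnC.
  by move=> a _; rewrite -(rreg_card hg a); apply: eq_card => b; rewrite inE.
have cX (w : 'I_N) : #|[set u; v] :|: g w| <= r + 2.
  apply: (leq_trans (leq_card_setU _ _)); rewrite addnC leq_add //.
    by rewrite (rreg_card hg).
  by rewrite cards2; case: (u != v).
have c1 : #|F1| <= (r + 2) * r.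
  rewrite /F1 (card_pairset (fun a b => (a \in X1) && (b \in g a))) (bigID (fun a => a \in X1)) /=.
  rewrite [X in _ + X]big1 ?addn0; last first.
    by move=> a aX; apply/eqP; rewrite cards_eq0; apply/eqP/setP => b; rewrite !inE (negbTE aX).
  rewrite (eq_bigr (fun _ => r)); last first.
    by move=> a aX; rewrite -(rreg_card hg a); apply: eq_card => b; rewrite !inE aX.
  by rewrite sum_nat_const leq_mul2r ?eX1 ?eX2 cX orbT.
have c2 : #|F2| <= (r + 2) * r.
  rewrite /F2 (card_pairset (fun a b => (b \in X2) && (b \in g a))).
  rewrite (eq_bigr (fun a => \sum_b ((b \in X2) && (a \in g b) : nat))); last first.
    by move=> a _; rewrite card_sum; apply: eq_bigr => b _; rewrite (rreg_sym hg).
  rewrite exchange_big /= (bigID (fun b => b \in X2)) /=.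
  rewrite [X in _ + X]big1 ?addn0; last first.
    by move=> b bX; apply/eqP; rewrite sum_nat_eq0; apply/forallP => a; rewrite (negbTE bX).
  rewrite (eq_bigr (fun _ => r)); last first.
    move=> b bX; rewrite -(rreg_card hg b) -cardsE card_sum.
    by apply: eq_bigr => a _; rewrite bX.
  by rewrite sum_nat_const leq_mul2r ?eX1 ?eX2 cX orbT.
have c3 : #|F3| <= size P.
  by rewrite (leq_trans _ (card_size P)) // subset_leq_card //; apply/subsetP => ab; rewrite inE.
have c4 : #|F4| <= size P.
  have -> : F4 = (fun ab : 'I_N * 'I_N => (ab.2, ab.1)) @^-1: F3.
    by apply/setP => ab; rewrite !inE.
  by rewrite card_preimset // => -[a b] [c d] [-> ->].
have sub : D \subset [set ab | valid P u v g ab] :|: (F1 :|: F2 :|: F3 :|: F4).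
  apply/subsetP => -[a b]; rewrite !inE /= /valid /= -eX1 -eX2 => gab.
  rewrite gab /=.
  by case: (a \in X1); case: (b \in X2); case: ((a, b) \in P); case: ((b, a) \in P).
have := subset_leq_card sub; rewrite cD => h.
apply: (leq_trans h); apply: (leq_trans (leq_card_setU _ _)); rewrite leq_add2l.
apply: (leq_trans (leq_card_setU _ _)).
have e : 2 * ((r + 2) * r) + 2 * size P = ((r+2)*r + (r+2)*r + size P) + size P by lia.
rewrite e leq_add //.
apply: (leq_trans (leq_card_setU _ _)); rewrite leq_add //.
by apply: (leq_trans (leq_card_setU _ _)); rewrite leq_add.
Qed.

Lemma switching : 0 < r -> 2 * (2 * ((r + 2) * r) + 2 * size P) <= r * N ->
  N * #|Aset r P u v| <= 2 * r * #|[set g | rreg r g && contP g P]|.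
Proof.
move=> hr hN.
set c := 2 * ((r + 2) * r) + 2 * size P in hN *.
have h1 : #|Aset r P u v| * (r * N) <= r ^ 2 * #|Bset r P u v| + #|Aset r P u v| * c.
  apply: leq_trans (leq_add (switch_count) (leqnn _)).
  have := @leq_sum _ (index_enum _) (fun g => g \in Aset r P u v) (fun _ => r * N) (fun g => #|[set ab | valid P u v g ab]| + c).
  rewrite big_split /= !sum_nat_const; apply => g gA.
  exact: valid_card.
have hB : #|Bset r P u v| <= #|[set g | rreg r g && contP g P]|.
  by apply: subset_leq_card; apply/subsetP => g; rewrite !inE => /and3P[-> ->].
have h2 : 2 * (#|Aset r P u v| * c) <= #|Aset r P u v| * (r * N).
  by rewrite mulnCA leq_mul2l hN orbT.
have h3 : #|Aset r P u v| * (r * N) <= 2 * (r ^ 2 * #|Bset r P u v|) by lia.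
rewrite -(leq_pmul2l hr).
have e1 : r * (N * #|Aset r P u v|) = #|Aset r P u v| * (r * N) by lia.
have e2 : r * (2 * r * #|[set g | rreg r g && contP g P]|) = 2 * (r ^ 2 * #|[set g | rreg r g && contP g P]|).
  by rewrite expnS expn1; lia.
rewrite e1 e2 (leq_trans h3) // leq_mul2l leq_mul2l hB !orbT //.
Qed.

End SwitchCount2.

Fixpoint nb {T : eqType} (s : seq T) : bool :=
  if s is a :: t then (if t is _ :: c :: _ then (c != a) && nb t else true) else true.

Lemma nb_map_iota (T : eqType) (f : nat -> T) n m :
  (forall i, m <= i -> i.+2 < m + n -> f i.+2 != f i) -> nb (map f (iota m n)).
Proof.
elim: n m => [|n IH] m H //=.
case: n IH H => [|[|n']] IH H //=.
rewrite (H m) ?leqnn //=; last by lia.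
have := IH m.+1; rewrite /=; apply => i hi hi2; apply: H; lia.
Qed.

Definition edges {T : Type} (s : seq T) := zip s (behead s).

Lemma zip_map_iota (T : Type) (f : nat -> T) n m :
  zip (map f (iota m n.+1)) (map f (iota m.+1 n)) = map (fun i => (f i, f i.+1)) (iota m n).
Proof. by elim: n m => [|n IH] m //=; rewrite -IH. Qed.

Lemma tvalid_rcons r w a :
  tvalid r (rcons w a) = tvalid r w && (a < (if size w == 0 then r else r.-1)).
Proof.
case: w => [|b w] /=; first by rewrite andbT.
by rewrite all_rcons; case: (b < r); case: (a < r.-1); case: (all _ w).
Qed.

Lemma tvalid_take r w i : tvalid r w -> tvalid r (take i w).
Proof.
case: w => [|b w]; case: i => [|i] //=.
by case/andP=> -> /=; rewrite -{1}(cat_take_drop i w) all_cat => /andP[].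
Qed.

Lemma tchild_rcons (v u : seq nat) : tchild v u -> exists c, u = rcons v c.
Proof.
case/andP=> /eqP su /eqP tu; exists (nth 0 u (size v)).
have hu : u = take (size v).+1 u by rewrite take_oversize // su.
by rewrite {1}hu (take_nth 0) ?su // tu.
Qed.

Section Tree.
Variables (N r : nat) (g : graph N) (x : 'I_N).
Hypothesis hg : rreg r g.

Definition cands (par : option 'I_N) (cur : 'I_N) : seq 'I_N :=
  enum (if par is Some p then g cur :\ p else g cur).

Fixpoint st (par : option 'I_N) (cur : 'I_N) (w : seq nat) : option 'I_N * 'I_N :=
  if w is a :: t then st (Some cur) (nth cur (cands par cur) a) t else (par, cur).

Definition phi w := (st None x w).2.
Definition parv w := (st None x w).1.

Lemma st_rcons par cur w a : st par cur (rcons w a) =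
  (Some (st par cur w).2, nth (st par cur w).2 (cands (st par cur w).1 (st par cur w).2) a).
Proof. by elim: w par cur => [|b w IH] par cur //=. Qed.

Lemma phi_rcons w a : phi (rcons w a) = nth (phi w) (cands (parv w) (phi w)) a.
Proof. by rewrite /phi /parv st_rcons. Qed.
Lemma parv_rcons w a : parv (rcons w a) = Some (phi w).
Proof. by rewrite /phi /parv st_rcons. Qed.
Lemma phi_nil : phi [::] = x. Proof. by []. Qed.
Lemma parv_nil : parv [::] = None. Proof. by []. Qed.

Lemma cands_sub par cur y : y \in cands par cur -> y \in g cur.
Proof. by rewrite mem_enum; case: par => [p|] //; rewrite inE => /andP[]. Qed.

Lemma size_cands w : tvalid r w ->
  size (cands (parv w) (phi w)) = if size w == 0 then r else r.-1.
Proof.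
elim/last_ind: w => [|u b IH]; first by rewrite /= -cardE (rreg_card hg).
rewrite tvalid_rcons size_rcons /= => /andP[vu hb].
rewrite parv_rcons /cands -cardE.
have hm : phi (rcons u b) \in g (phi u).
  by rewrite phi_rcons; apply: cands_sub; apply: mem_nth; rewrite IH.
have := cardsD1 (phi u) (g (phi (rcons u b))).
by rewrite (rreg_card hg) -(rreg_sym hg) hm add1n => ->.
Qed.

Lemma mem_child w a : tvalid r (rcons w a) -> phi (rcons w a) \in cands (parv w) (phi w).
Proof.
rewrite tvalid_rcons => /andP[vw ha]; rewrite phi_rcons; apply: mem_nth.
by rewrite size_cands.
Qed.

Lemma child_adj w a : tvalid r (rcons w a) -> phi (rcons w a) \in g (phi w).
Proof. by move/mem_child/cands_sub. Qed.

Lemma child_nb u b a : tvalid r (rcons (rcons u b) a) -> phi (rcons (rcons u b) a) != phi u.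
Proof.
by move/mem_child; rewrite parv_rcons mem_enum in_setD1 => /andP[].
Qed.

Lemma child_inj w a b : tvalid r (rcons w a) -> tvalid r (rcons w b) ->
  phi (rcons w a) = phi (rcons w b) -> a = b.
Proof.
rewrite !tvalid_rcons => /andP[vw ha] /andP[_ hb]; rewrite !phi_rcons => e.
apply/eqP; rewrite -(@nth_uniq _ (phi w) (cands (parv w) (phi w))) ?e //.
- by rewrite size_cands.
- by rewrite size_cands.
- by rewrite /cands enum_uniq.
Qed.

Lemma ballS k : ball g k.+1 x = grow g (ball g k x).
Proof. by rewrite /ball iterS. Qed.

Lemma sub_grow (A : {set 'I_N}) : A \subset grow g A.
Proof. by apply/subsetP => y yA; rewrite inE yA. Qed.

Lemma ball_mono k k' : k <= k' -> ball g k x \subset ball g k' x.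
Proof.
move=> /subnK <-; elim: (k' - k) => [|d IH] //=.
by apply: (subset_trans IH); apply: sub_grow.
Qed.

Lemma phi_ball w : tvalid r w -> phi w \in ball g (size w) x.
Proof.
elim/last_ind: w => [|u b IH]; first by rewrite /ball /= inE.
move=> vw; have := vw; rewrite tvalid_rcons => /andP[vu _].
rewrite size_rcons ballS /grow !inE; apply/orP; right; apply/existsP; exists (phi u).
by rewrite IH // child_adj.
Qed.

Lemma ball_phi k y : y \in ball g k x -> exists w, [/\ tvalid r w, size w <= k & phi w = y].
Proof.
elim: k y => [|k IH] y.
  by rewrite /ball /= inE => /eqP->; exists [::].
rewrite ballS /grow !inE => /orP[/IH [w [vw sw e]]|]; first by exists w; split => //; lia.
case/existsP => a /andP[/IH [w [vw sw <-]] ya].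
case yc: (y \in cands (parv w) (phi w)).
  exists (rcons w (index y (cands (parv w) (phi w)))); split.
  - by rewrite tvalid_rcons vw -size_cands // index_mem yc.
  - by rewrite size_rcons.
  - by rewrite phi_rcons nth_index.
case/lastP: w vw sw ya yc => [|u b] vw sw ya.
  by rewrite /cands mem_enum /= ya.
rewrite /cands parv_rcons mem_enum inE ya andbT inE => /negbFE /eqP ->.
exists u; split.
- by move: vw; rewrite tvalid_rcons => /andP[].
- by move: sw; rewrite size_rcons; lia.
- by [].
Qed.

Definition walkv w := map (fun i => phi (take i w)) (iota 0 (size w).+1).
Definition E w := edges (walkv w).

Lemma mem_E w a b : (a, b) \in E w ->
  exists i, [/\ i < size w, a = phi (take i w) & b = phi (take i.+1 w)].
Proof.
rewrite /E /edges /walkv /= zip_map_iota => /mapP [i]; rewrite mem_iota add0n => hi [-> ->].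
by exists i.
Qed.

Definition V k w := tvalid r w && (size w <= k).
Definition Inj k := forall w1 w2, V k w1 -> V k w2 -> phi w1 = phi w2 -> w1 = w2.
Definition Adj k := forall w1 w2, V k w1 -> V k w2 -> phi w2 \in g (phi w1) -> tadj w1 w2.

Lemma V_take k w i : V k w -> i <= size w -> V (if i < size w then k.-1 else k) (take i w).
Proof.
case/andP=> vw sw hi; rewrite /V tvalid_take // size_takel //.
by case: ifP => h; lia.
Qed.

Lemma take_full (w : seq nat) : take (size w) w = w.
Proof. by rewrite take_size. Qed.

Lemma NewL k (IA : Adj k) w v : V k.+1 w -> size w = k.+1 -> V k v -> phi w != phi v.
Proof.
case/lastP: w => [|u b] //; rewrite /V size_rcons => /andP[vw _] [su] /andP[vv sv].
apply/eqP => e.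
have vu : tvalid r u by move: vw; rewrite tvalid_rcons => /andP[].
have : phi v \in g (phi u) by rewrite -e child_adj.
move/(IA u v); rewrite /V vu vv su leqnn sv => /(_ isT isT) /orP[/andP[/eqP h _]|].
  by move: sv; rewrite h su ltnn.
move/tchild_rcons => [c ec]; subst u.
by move: (child_nb vw); rewrite e eqxx.
Qed.

Lemma HL m (I : Inj m) wa wb : V m wa -> V m wb -> (phi wa, phi wb) \in E wa ++ E wb -> tchild wa wb.
Proof.
move=> Va Vb; rewrite mem_cat => /orP[] /mem_E [i [hi e1 e2]].
  have := V_take Va (ltnW hi); rewrite hi => Vt.
  have Vt' : V m (take i wa) by move: Vt; rewrite /V => /andP[-> ?]; lia.
  have := I _ _ Va Vt' e1 => ew.
  by have := size_takel (ltnW hi); rewrite -ew => h; rewrite h ltnn in hi.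
have Vt : V m (take i wb).
  by have := V_take Vb (ltnW hi); rewrite hi /V => /andP[-> ?]; lia.
have Vt1 : V m (take i.+1 wb).
  by have := V_take Vb hi; case: ifP => _; rewrite /V => /andP[-> ?]; lia.
have ea := I _ _ Va Vt e1; have eb := I _ _ Vb Vt1 e2.
apply/andP; split.
  by rewrite {1}eb ea !size_takel // ltnW.
by rewrite {1}ea size_takel; [rewrite -ea|apply: ltnW].
Qed.

Section Good.
Variable l : nat.
Hypothesis T : forall w1 w2, V l w1 -> V l w2 -> phi w2 \in g (phi w1) ->
  ((phi w1, phi w2) \in E w1 ++ E w2) || ((phi w2, phi w1) \in E w1 ++ E w2).

Lemma Q k : k <= l -> Inj k /\ Adj k.
Proof.
elim: k => [|k IH] hk.
  have e0 w : V 0 w -> w = [::] by case: w => // ? ?; rewrite /V /= andbF.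
  split; first by move=> w1 w2 /e0 -> /e0 ->.
  move=> w1 w2 /e0 -> /e0 ->; rewrite phi_nil.
  by rewrite (negbTE (rreg_loop hg x)).
have {IH} [I A] := IH (ltnW hk).
have Vk1 w : V k w -> V k.+1 w by rewrite /V => /andP[-> ?]; lia.
have Vl w : V k.+1 w -> V l w by rewrite /V => /andP[-> ?]; lia.
have VkS w : V k.+1 w -> size w != k.+1 -> V k w by rewrite /V => /andP[-> ?] ?; lia.
have I1 : Inj k.+1.
  move=> w1 w2 V1 V2 e.
  case s1: (size w1 == k.+1); last first.
    case s2: (size w2 == k.+1); last by apply: I => //; apply: VkS; rewrite ?s1 ?s2.
    by move: (NewL A V2 (eqP s2) (VkS _ V1 (negbT s1))); rewrite e eqxx.
  case s2: (size w2 == k.+1); last first.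
    by move: (NewL A V1 (eqP s1) (VkS _ V2 (negbT s2))); rewrite e eqxx.
  move: V1 V2 e s1 s2; case/lastP: w1 => [|u1 b1] //; case/lastP: w2 => [|u2 b2] //.
  rewrite !size_rcons !eqSS => V1 V2 e /eqP s1 /eqP s2.
  have vu1 : tvalid r u1 by move: V1 => /andP[]; rewrite tvalid_rcons => /andP[].
  have vu2 : tvalid r u2 by move: V2 => /andP[]; rewrite tvalid_rcons => /andP[].
  have Vu1 : V k u1 by rewrite /V vu1 s1 leqnn.
  have Vu2 : V k u2 by rewrite /V vu2 s2 leqnn.
  case eu: (u1 == u2).
    move/eqP: eu => eu; subst u2; congr rcons.
    by apply: child_inj e; [case/andP: V1|case/andP: V2].
  exfalso.
  have N1 v : V k v -> phi (rcons u1 b1) != phi v by apply: NewL; rewrite // size_rcons s1.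
  have := T (Vl _ (Vk1 _ Vu2)) (Vl _ V1).
  rewrite e child_adj; last by case/andP: V2.
  rewrite -e => /(_ isT).
  have F a b : (a, b) \in E u2 ++ E (rcons u1 b1) ->
      (a = phi u1 /\ b = phi (rcons u1 b1)) \/ (a != phi (rcons u1 b1) /\ b != phi (rcons u1 b1)).
    rewrite mem_cat => /orP[] /mem_E [i [hi -> ->]].
      right; split; rewrite eq_sym; apply: N1.
        by have := V_take Vu2 (ltnW hi); rewrite hi /V => /andP[-> ?]; lia.
      by have := V_take Vu2 hi; case: ifP => _; rewrite /V => /andP[-> ?]; lia.
    move: hi; rewrite size_rcons ltnS leq_eqVlt => /orP[/eqP ->|hi].
      left; split; first by rewrite -cats1 take_size_cat.
      by rewrite -(size_rcons u1 b1) take_full.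
    right; split; rewrite eq_sym; apply: N1.
      have hi1 : i <= size (rcons u1 b1) by rewrite size_rcons; lia.
      have := V_take V1 hi1; rewrite size_rcons ltnS (ltnW hi).
      by rewrite /V => /andP[-> ?]; lia.
    have hi1 : i.+1 <= size (rcons u1 b1) by rewrite size_rcons; lia.
    have := V_take V1 hi1; rewrite size_rcons ltnS hi.
    by rewrite /V => /andP[-> ?]; lia.
  case/orP => /F [[h1 h2]|[h1 h2]].
  - by move: eu; rewrite (I _ _ Vu2 Vu1 h1) eqxx.
  - by move/eqP: h2.
  - by move: (N1 _ Vu1); rewrite h1 eqxx.
  - by move/eqP: h1.
split => //.
move=> w1 w2 V1 V2 a; have := T (Vl _ V1) (Vl _ V2) a.
case/orP => h; rewrite /tadj; apply/orP; [left|right]; apply: (HL I1) => //.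
by rewrite mem_cat orbC -mem_cat.
Qed.

Lemma good_of_T : good r g l x.
Proof.
have [I A] := Q (leqnn l).
have fex y : exists w, y \in ball g l x -> V l w /\ phi w = y.
  case yb: (y \in ball g l x); last by exists [::].
  by have [w [vw sw e]] := ball_phi yb; exists w => _; rewrite /V vw sw.
have [f hf] := choice fex.
have inb w : V l w -> phi w \in ball g l x.
  by case/andP=> vw sw; apply: (subsetP (ball_mono sw)); apply: phi_ball.
exists f; split.
- have xb : x \in ball g l x by apply: (subsetP (ball_mono (leq0n l))); rewrite /ball /= inE.
  have [Vf ef] := hf x xb.
  by apply: I => //; rewrite ef.
- move=> y z yb zb e; have [_ <-] := hf y yb; have [_ <-] := hf z zb; by rewrite e.
- by move=> y yb; have [] := hf y yb.
- move=> w vw sw; have Vw : V l w by rewrite /V vw sw.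
  exists (phi w); first exact: inb.
  have [Vf ef] := hf _ (inb _ Vw); exact: I.
- move=> y z yb zb; have [Vy ey] := hf y yb; have [Vz ez] := hf z zb.
  apply/idP/idP => h.
    by apply: A => //; rewrite ey ez.
  case/orP: h => /tchild_rcons [c ec].
    rewrite -ey -ez ec child_adj //; by case/andP: Vz; rewrite ec.
  rewrite (rreg_sym hg) -ey -ez ec child_adj //; by case/andP: Vy; rewrite ec.
Qed.
End Good.

Lemma walkv_sizeP w : size (walkv w) == (size w).+1.
Proof. by rewrite /walkv size_map size_iota. Qed.

Lemma walkv_nth w i y0 : i <= size w -> nth y0 (walkv w) i = phi (take i w).
Proof. by move=> hi; rewrite /walkv (nth_map 0) ?size_iota ?nth_iota. Qed.

Lemma walkv_last w y0 : last y0 (walkv w) = phi w.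
Proof.
by rewrite -(nth_last y0) (eqP (walkv_sizeP w)) /= walkv_nth // take_full.
Qed.

Lemma take_nth2 (w : seq nat) i : i.+1 < size w ->
  take i.+2 w = rcons (rcons (take i w) (nth 0 w i)) (nth 0 w i.+1).
Proof. by move=> h; rewrite (take_nth 0) // (take_nth 0) // ltnW. Qed.

Lemma walkv_nb w : tvalid r w -> nb (walkv w).
Proof.
move=> vw; apply: nb_map_iota => i _ hi.
rewrite take_nth2; last by lia.
apply: child_nb; rewrite -take_nth2; last by lia.
exact: tvalid_take.
Qed.

Lemma walkv_cont w : tvalid r w -> contP g (E w).
Proof.
move=> vw; apply/allP => -[a b] /mem_E [i [hi -> ->]] /=.
rewrite (take_nth 0) //; apply: child_adj; rewrite -(take_nth 0) //.
exact: tvalid_take.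
Qed.

Lemma bad_witness l : ~ good r g l x -> exists w1 w2,
  [/\ V l w1, V l w2, phi w2 \in g (phi w1),
      (phi w1, phi w2) \notin E w1 ++ E w2 & (phi w2, phi w1) \notin E w1 ++ E w2].
Proof.
move=> ng; case: (pselect (exists w1 w2,
  [/\ V l w1, V l w2, phi w2 \in g (phi w1),
      (phi w1, phi w2) \notin E w1 ++ E w2 & (phi w2, phi w1) \notin E w1 ++ E w2])) => // nex.
exfalso; apply: ng; apply: good_of_T => w1 w2 V1 V2 a.
apply/negPn/negP; rewrite negb_or => /andP[h1 h2]; apply: nex; by exists w1, w2.
Qed.

End Tree.

Arguments nb {T} s : simpl never.
Arguments edges {T} s : simpl never.
Arguments contP {N} g Q : simpl never.

Lemma sum_tupleS (T : finType) n (F : n.+1.-tuple T -> nat) :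
  \sum_(t : n.+1.-tuple T) F t = \sum_(a : T) \sum_(t : n.-tuple T) F [tuple of a :: t].
Proof.
rewrite pair_big /=.
rewrite (reindex (fun p : T * n.-tuple T => [tuple of p.1 :: p.2])) //=.
exists (fun t : n.+1.-tuple T => (thead t, [tuple of behead t])).
  by move=> [a t] _ /=; rewrite theadE; congr (_, _); apply: val_inj.
by move=> t _ /=; rewrite -tuple_eta.
Qed.

Lemma sum_tuple0 (T : finType) (F : 0.-tuple T -> nat) : \sum_(t : 0.-tuple T) F t = F [tuple].
Proof. by rewrite (big_pred1 [tuple]) // => t /=; rewrite [t]tuple0; apply/esym/eqP. Qed.

Lemma sum_pred1 (T : finType) (y : T) : \sum_(a : T) ((a == y) : nat) = 1.
Proof.
by rewrite (bigD1 y) //= eqxx big1 // => a /negbTE ->.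
Qed.

Lemma sum_ge (I : finType) (F : I -> nat) i0 : F i0 <= \sum_i F i.
Proof. by rewrite (bigD1 i0) //= leq_addr. Qed.

Section Count.
Variables (N r : nat) (g : graph N).
Hypothesis hg : rreg r g.
Hypothesis hr : 1 < r.

Definition cnt (y z : 'I_N) p :=
  \sum_(t : p.+1.-tuple 'I_N) ([&& thead t == y, nb (z :: t) & contP g (edges t)] : nat).

Lemma cnt0 y z : cnt y z 0 <= 1.
Proof.
rewrite /cnt sum_tupleS; apply: (leq_trans _ (eq_leq (sum_pred1 y))); apply: leq_sum => a _.
by rewrite sum_tuple0 theadE; case: (a == y).
Qed.

Lemma tuple_case n (t : n.+1.-tuple 'I_N) : exists b rest, tval t = b :: rest /\ thead t = b.
Proof.
case: t => [[|b rest] hs] //; exists b, rest; split; first by [].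
by rewrite /thead (tnth_nth b).
Qed.

Lemma cntS y z p : cnt y z p.+1 <= \sum_(y' in g y :\ z) cnt y' y p.
Proof.
rewrite /cnt sum_tupleS (bigD1 y) //= [X in _ + X <= _]big1 ?addn0; last first.
  by move=> a ay; apply: big1 => t _; rewrite theadE (negbTE ay).
rewrite exchange_big /=; apply: leq_sum => t _.
rewrite theadE eqxx andTb.
have [b [rest [et ht]]] := tuple_case t.
have -> : nb [:: z, y & tval t] = (b != z) && nb (y :: t) by rewrite et.
have -> : contP g (edges (y :: t)) = (b \in g y) && contP g (edges t) by rewrite et.
case E: [&& b != z, nb (y :: t) & (b \in g y) && contP g (edges t)]; last by rewrite -andbA E.
move/and3P: E => [bz nbt /andP[bg ct]].
rewrite bz nbt bg ct /=.
have bin : b \in g y :\ z by rewrite in_setD1 bz bg.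
by rewrite (bigD1 b) //= ht eqxx.
Qed.

Lemma cnt_bound p y z : z \in g y -> cnt y z p <= (r - 1) ^ p.
Proof.
elim: p y z => [|p IH] y z zy; first exact: cnt0.
apply: (leq_trans (cntS _ _ _)).
have h : forall y', y' \in g y :\ z -> cnt y' y p <= (r - 1) ^ p.
  by move=> y'; rewrite in_setD1 => /andP[_ hy]; apply: IH; rewrite (rreg_sym hg).
apply: leq_trans; first by apply: leq_sum => i hi; exact: (h i hi).
rewrite sum_nat_const expnS leq_mul2r; apply/orP; right.
have := cardsD1 z (g y); rewrite zy (rreg_card hg) => ->.
by rewrite add1n subn1.
Qed.

Lemma cnt_xx x p : cnt x x p <= r * (r - 1) ^ p.
Proof.
case: p => [|p]; first by rewrite expn0 muln1 (leq_trans (cnt0 _ _)) // ltnW.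
apply: (leq_trans (cntS _ _ _)).
have h : forall y', y' \in g x :\ x -> cnt y' x p <= (r - 1) ^ p.
  by move=> y'; rewrite in_setD1 => /andP[_ hy]; apply: cnt_bound; rewrite (rreg_sym hg).
apply: leq_trans; first by apply: leq_sum => i hi; exact: (h i hi).
rewrite sum_nat_const.
have := cardsD1 x (g x); rewrite (negbTE (rreg_loop hg x)) (rreg_card hg) add0n => <-.
rewrite leq_mul2l expnS; apply/orP; right; apply: leq_pmull; lia.
Qed.

Lemma nb_head (t : seq 'I_N) a : nb (a :: t) -> contP g (edges (a :: t)) -> nb (a :: a :: t).
Proof.
case: t => [|b t] // h.
have -> : contP g (edges [:: a, b & t]) = (b \in g a) && contP g (edges (b :: t)) by [].
have -> : nb [:: a, a, b & t] = (b != a) && nb [:: a, b & t] by [].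
by case/andP => ab _; rewrite h andbT eq_sym (rreg_neq hg ab).
Qed.

Lemma nbw_le x p :
  \sum_(t : p.+1.-tuple 'I_N) ([&& thead t == x, nb t & contP g (edges t)] : nat) <= r * (r - 1) ^ p.
Proof.
apply: leq_trans (cnt_xx x p); apply: leq_sum => t _.
have [b [rest [et ht]]] := tuple_case t.
rewrite et ht; case: (b =P x) => //= -> .
case E: (nb (x :: rest)) => //=; case C: (contP _ _) => //=.
by rewrite nb_head.
Qed.

End Count.


Lemma contP_cat N (g : graph N) P1 P2 : contP g (P1 ++ P2) = contP g P1 && contP g P2.
Proof. by rewrite /contP all_cat. Qed.

Lemma size_edges (T : Type) n (t : n.+1.-tuple T) : size (edges t) = n.
Proof. by rewrite /edges size_zip size_behead size_tuple /=; lia. Qed.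

Section Main.
Variables (N r l : nat).

Definition lst n (t : n.+1.-tuple 'I_N) := last (thead t) t.

Definition Wit (g : graph N) p q (t1 : p.+1.-tuple 'I_N) (t2 : q.+1.-tuple 'I_N) : bool :=
  [&& thead t1 == thead t2, nb t1, nb t2, contP g (edges t1 ++ edges t2) &
   [&& lst t2 \in g (lst t1), (lst t1, lst t2) \notin edges t1 ++ edges t2 &
       (lst t2, lst t1) \notin edges t1 ++ edges t2]].

Definition wt (g : graph N) x w : (size w).+1.-tuple 'I_N := Tuple (walkv_sizeP g x w).

Lemma wt_head g x w : thead (wt g x w) = x.
Proof. by rewrite /thead (tnth_nth x) /= take0. Qed.

Lemma wt_last g x w : lst (wt g x w) = phi g x w.
Proof. rewrite /lst; exact: walkv_last. Qed.

Lemma bad_le_wit g : rreg r g -> #|bad_set r g l| <=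
  \sum_(p < l.+1) \sum_(q < l.+1) \sum_(t1 : p.+1.-tuple 'I_N) \sum_(t2 : q.+1.-tuple 'I_N)
     Wit g t1 t2.
Proof.
move=> hg.
have step x : x \in bad_set r g l -> 1 <= \sum_(p < l.+1) \sum_(q < l.+1)
     \sum_(t1 : p.+1.-tuple 'I_N) ((thead t1 == x) * \sum_(t2 : q.+1.-tuple 'I_N) Wit g t1 t2).
  rewrite inE => /asboolP ng.
  have [w1 [w2 [V1 V2 a n1 n2]]] := bad_witness hg ng.
  have h1 : size w1 < l.+1 by case/andP: V1.
  have h2 : size w2 < l.+1 by case/andP: V2.
  apply: leq_trans (sum_ge _ (Ordinal h1)).
  apply: leq_trans (sum_ge _ (Ordinal h2)).
  apply: leq_trans (sum_ge _ (wt g x w1)).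
  rewrite wt_head eqxx mul1n.
  apply: leq_trans (sum_ge _ (wt g x w2)).
  rewrite lt0b /Wit !wt_head !wt_last eqxx /= a n1 n2 !andbT.
  rewrite contP_cat !(@walkv_cont N r g x hg) ?(@walkv_nb N r g x hg) //; by [case/andP: V1 | case/andP: V2].
rewrite -sum1_card big_mkcond /=.
apply: leq_trans.
  apply: leq_sum => x _; case: ifP => [xb|_]; [exact: step xb| exact: leq0n].
  rewrite exchange_big; apply: leq_sum => p _; rewrite exchange_big; apply: leq_sum => q _.
  rewrite exchange_big; apply: leq_sum => t1 _.
  rewrite -big_distrl /= (eq_bigr (fun x => (x == thead t1) : nat)) ?sum_pred1 ?mul1n //.
by move=> x _; rewrite eq_sym.
Qed.

Definition RR := [set g : graph N | rreg r g].

Lemma exch4 (A : {set graph N})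
  (F : graph N -> forall p q : 'I_l.+1, p.+1.-tuple 'I_N -> q.+1.-tuple 'I_N -> nat) :
  \sum_(g in A) \sum_(p < l.+1) \sum_(q < l.+1) \sum_(t1 : p.+1.-tuple 'I_N) \sum_(t2 : q.+1.-tuple 'I_N) F g p q t1 t2 =
  \sum_(p < l.+1) \sum_(q < l.+1) \sum_(t1 : p.+1.-tuple 'I_N) \sum_(t2 : q.+1.-tuple 'I_N) \sum_(g in A) F g p q t1 t2.
Proof.
rewrite exchange_big; apply: eq_bigr => p _; rewrite exchange_big; apply: eq_bigr => q _.
rewrite exchange_big; apply: eq_bigr => t1 _; by rewrite exchange_big.
Qed.

Lemma wit_sum (hr : 0 < r) p q (hp : p <= l) (hq : q <= l)
  (hN : 2 * (2 * ((r + 2) * r) + 2 * (2 * l)) <= r * N)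
  (t1 : p.+1.-tuple 'I_N) (t2 : q.+1.-tuple 'I_N) :
  N * (\sum_(g in RR) Wit g t1 t2) <=
  2 * r * \sum_(g in RR) ([&& thead t1 == thead t2, nb t1, nb t2 & contP g (edges t1 ++ edges t2)] : nat).
Proof.
set P := edges t1 ++ edges t2.
case G: [&& thead t1 == thead t2, nb t1, nb t2, (lst t1, lst t2) \notin P & (lst t2, lst t1) \notin P]; last first.
  rewrite big1 ?muln0 // => g _.
  case W: (Wit g t1 t2) => //; move: W G; rewrite /Wit -/P.
  by case/and5P => -> -> -> _ /and3P[_ -> ->].
move/and5P: G => [hh n1 n2 uv vu].
have -> : \sum_(g in RR) Wit g t1 t2 = #|Aset r P (lst t1) (lst t2)|.
  rewrite -sum1_card big_mkcond [RHS]big_mkcond; apply: eq_bigr => g _.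
  rewrite !inE /Wit -/P hh n1 n2 uv vu /= !andbT.
  by case: (rreg r g); case: (contP g P); case: (_ \in _).
apply: leq_trans (switching uv vu hr _) _.
  by rewrite size_cat !size_edges; nia.
rewrite leq_mul2l; apply/orP; right.
rewrite hh n1 n2 /= -sum1_card big_mkcond [X in _ <= X]big_mkcond; apply: leq_sum => g _.
by rewrite !inE; case: (rreg r g); case: (contP g P).
Qed.

Lemma pair_bound g (hg : rreg r g) (hr : 1 < r) p q :
  \sum_(t1 : p.+1.-tuple 'I_N) \sum_(t2 : q.+1.-tuple 'I_N)
    ([&& thead t1 == thead t2, nb t1, nb t2 & contP g (edges t1 ++ edges t2)] : nat)
  <= N * (r * (r - 1) ^ p) * (r * (r - 1) ^ q).
Proof.
pose A n (t : n.+1.-tuple 'I_N) x := ([&& thead t == x, nb t & contP g (edges t)] : nat).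
have e (t1 : p.+1.-tuple 'I_N) (t2 : q.+1.-tuple 'I_N) :
    ([&& thead t1 == thead t2, nb t1, nb t2 & contP g (edges t1 ++ edges t2)] : nat)
    = \sum_x A _ t1 x * A _ t2 x.
  rewrite (bigD1 (thead t1)) //= big1 ?addn0 => [|x hx]; last first.
    by rewrite /A eq_sym (negbTE hx).
  rewrite /A eqxx contP_cat eq_sym.
  by case: (thead t2 == thead t1); case: (nb t1); case: (nb t2);
     case: (contP g (edges t1)); case: (contP g (edges t2)).
rewrite (eq_bigr (fun t1 => \sum_(t2 : q.+1.-tuple 'I_N) \sum_x A _ t1 x * A _ t2 x)); last first.
  by move=> t1 _; apply: eq_bigr => t2 _; rewrite e.
have -> : \sum_(t1 : p.+1.-tuple 'I_N) \sum_(t2 : q.+1.-tuple 'I_N) \sum_x A _ t1 x * A _ t2 x =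
    \sum_x (\sum_(t1 : p.+1.-tuple 'I_N) A _ t1 x) * (\sum_(t2 : q.+1.-tuple 'I_N) A _ t2 x).
  rewrite [RHS](eq_bigr (fun x => \sum_(t1 : p.+1.-tuple 'I_N) \sum_(t2 : q.+1.-tuple 'I_N) A _ t1 x * A _ t2 x)); last first.
    by move=> x _; rewrite big_distrl /=; apply: eq_bigr => t1 _; rewrite big_distrr.
  rewrite [RHS]exchange_big /=; apply: eq_bigr => t1 _; by rewrite exchange_big.
apply: (@leq_trans (\sum_(x < N) (r * (r - 1) ^ p) * (r * (r - 1) ^ q))).
  by apply: leq_sum => x _; apply: leq_mul; apply: nbw_le.
by rewrite sum_nat_const card_ord mulnA.
Qed.

Lemma first_moment (hr : 1 < r) (hN : 2 * (2 * ((r + 2) * r) + 2 * (2 * l)) <= r * N) :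
  \sum_(g in RR) #|bad_set r g l| <=
  2 * r * (r ^ 2 * (\sum_(p < l.+1) (r - 1) ^ p) ^ 2) * #|RR|.
Proof.
have hr0 : 0 < r by lia.
have N0 : 0 < N.
  rewrite lt0n; apply/eqP => e; move: hN; rewrite e muln0; lia.
rewrite -(leq_pmul2l N0).
apply: (@leq_trans (N * \sum_(g in RR) \sum_(p < l.+1) \sum_(q < l.+1)
   \sum_(t1 : p.+1.-tuple 'I_N) \sum_(t2 : q.+1.-tuple 'I_N) (Wit g t1 t2 : nat))).
  rewrite leq_mul2l; apply/orP; right; apply: leq_sum => g; rewrite inE => hg.
  exact: bad_le_wit.
rewrite (exch4 RR (fun g p q t1 t2 => (Wit g t1 t2 : nat))).
apply: (@leq_trans (\sum_(p < l.+1) \sum_(q < l.+1)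
   \sum_(t1 : p.+1.-tuple 'I_N) \sum_(t2 : q.+1.-tuple 'I_N) 2 * r * \sum_(g in RR)
     ([&& thead t1 == thead t2, nb t1, nb t2 & contP g (edges t1 ++ edges t2)] : nat))).
  rewrite big_distrr /=; apply: leq_sum => p _.
  rewrite big_distrr /=; apply: leq_sum => q _.
  rewrite big_distrr /=; apply: leq_sum => t1 _.
  rewrite big_distrr /=; apply: leq_sum => t2 _.
  apply: wit_sum => //; [exact: (ltnSE (ltn_ord p)) | exact: (ltnSE (ltn_ord q))].
have e1 : \sum_(p < l.+1) \sum_(q < l.+1)
   \sum_(t1 : p.+1.-tuple 'I_N) \sum_(t2 : q.+1.-tuple 'I_N) 2 * r * \sum_(g in RR)
     ([&& thead t1 == thead t2, nb t1, nb t2 & contP g (edges t1 ++ edges t2)] : nat) =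
  2 * r * \sum_(g in RR) \sum_(p < l.+1) \sum_(q < l.+1)
   \sum_(t1 : p.+1.-tuple 'I_N) \sum_(t2 : q.+1.-tuple 'I_N)
     ([&& thead t1 == thead t2, nb t1, nb t2 & contP g (edges t1 ++ edges t2)] : nat).
  rewrite (exch4 RR (fun g p q t1 t2 =>
     ([&& thead t1 == thead t2, nb t1, nb t2 & contP g (edges t1 ++ edges t2)] : nat))).
  rewrite big_distrr /=; apply: eq_bigr => p _.
  rewrite big_distrr /=; apply: eq_bigr => q _.
  rewrite big_distrr /=; apply: eq_bigr => t1 _.
  by rewrite big_distrr.
rewrite e1.
apply: (@leq_trans (2 * r * (#|RR| * (N * (r ^ 2 * (\sum_(p < l.+1) (r - 1) ^ p) ^ 2))))); last first.
  by apply: eq_leq; nia.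
rewrite leq_mul2l; apply/orP; right.
pose a (p : 'I_l.+1) := (r - 1) ^ p.
have key : \sum_(p < l.+1) \sum_(q < l.+1) N * (r * a p) * (r * a q) =
    N * (r ^ 2 * (\sum_(p < l.+1) a p) ^ 2).
  rewrite -[(\sum_(p < l.+1) a p) ^ 2]mulnn big_distrl /= !big_distrr /=; apply: eq_bigr => p _.
  rewrite !big_distrr /=; apply: eq_bigr => q _; rewrite /a; nia.
apply: (@leq_trans (\sum_(g in RR) N * (r ^ 2 * (\sum_(p < l.+1) a p) ^ 2))); last first.
  by rewrite sum_nat_const.
apply: leq_sum => g; rewrite inE => hg; rewrite -key.
apply: leq_sum => p _; apply: leq_sum => q _; exact: pair_bound.
Qed.

End Main.

Lemma geo_bound r l : 2 < r -> \sum_(p < l.+1) (r - 1) ^ p <= 2 * (r - 1) ^ l.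
Proof.
move=> hr; elim: l => [|l IH]; first by rewrite big_ord1 expn0.
rewrite big_ord_recr /= expnS.
have h2 : 2 <= r - 1 by lia.
move: IH; set S := \sum_(i < l.+1) _; set X := (r - 1) ^ l => IH.
nia.
Qed.

Lemma small_N r N l : 2 < r -> r * N < 2 * (2 * ((r + 2) * r) + 2 * (2 * l)) ->
  N <= (4 * r + 16) * (r - 1) ^ (2 * l).
Proof.
move=> hr h.
have h1 : 2 * l < (r - 1) ^ (2 * l) by apply: ltn_expl; lia.
have h2 : 0 < (r - 1) ^ (2 * l) by rewrite expn_gt0; apply/orP; left; lia.
move: h1 h2; set X := (r - 1) ^ (2 * l) => h1 h2.
nia.
Qed.

Lemma moment_bound N r l : 2 < r -> 2 * (2 * ((r + 2) * r) + 2 * (2 * l)) <= r * N ->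
  \sum_(g in RR N r) #|bad_set r g l| <= 8 * r ^ 3 * (r - 1) ^ (2 * l) * #|RR N r|.
Proof.
move=> hr hN; apply: leq_trans (first_moment (ltnW hr) hN) _.
rewrite leq_mul2r; apply/orP; right.
have := geo_bound l hr; set S := \sum_(p < l.+1) _ => hS.
have e : (r - 1) ^ (2 * l) = ((r - 1) ^ l) ^ 2 by rewrite mulnC expnM.
rewrite e; move: hS; set X := (r - 1) ^ l => hS.
have : S ^ 2 <= (2 * X) ^ 2 by rewrite leq_exp2r.
rewrite !expnS ?expn1 ?expn0 ?muln1 => h; nia.
Qed.

Local Open Scope ring_scope.

Theorem lemma4p2 (R : realType) (r : nat) (hr : (3 <= r)%N) (l : nat -> nat) :
  exists K2 : R, forall (N : nat), ~~ odd N ->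
    ((r - 1) ^ l N < 5 * N)%N ->
    forall z : R, 0 < z ->
      Prob R r (fun g : graph N =>
        (r%:R ^+ 2 * (r - 1)%:R ^ (2 * (l N)%:Z - 2) * z
           <= #|bad_set r g (l N)|%:R)) <= K2 / z.
Proof.
exists (8 * r * (r - 1) ^ 2 + 4 * r + 16)%N%:R => N _ _ z z0.
set l0 := l N.
set q : R := (r - 1)%:R.
set T : R := r%:R ^+ 2 * q ^ (2 * l0%:Z - 2).
have q0 : 0 < q by rewrite ltr0n; lia.
have qr : q <= r%:R by rewrite ler_nat; lia.
have hT : T * q ^+ 2 = (r ^ 2 * (r - 1) ^ (2 * l0))%N%:R.
  rewrite /T -mulrA [q ^+ 2]exprnP -exprzDr ?unitf_gt0 // subrK natrM !natrX.
  by rewrite -(PoszM 2 l0) -exprnP.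
have T0 : 0 < T by rewrite /T mulr_gt0 // ?exprn_gt0 ?exprz_gt0 // ltr0n; lia.
have hX : ((r - 1) ^ (2 * l0))%N%:R <= T.
  have r0 : (0 : R) < r%:R ^+ 2 by rewrite exprn_gt0 // ltr0n; lia.
  rewrite -(ler_pM2r r0) -[X in X <= _]mul1r.
  have -> : 1 * (((r - 1) ^ (2 * l0))%N%:R * r%:R ^+ 2) = T * q ^+ 2 by rewrite hT natrM natrX; ring.
  by rewrite ler_pM2l // lerXn2r // ?nnegrE ltW // (lt_le_trans q0).
rewrite /Prob.
set Eset := [set g : graph N | rreg r g && _].
set M := #|[set g : graph N | rreg r g]|.
have KE : (0 : R) <= (8 * r * (r - 1) ^ 2 + 4 * r + 16)%N%:R / z by rewrite divr_ge0 // ltW.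
have EM : (#|Eset| <= M)%N.
  by apply: subset_leq_card; apply/subsetP => g; rewrite !inE => /andP[].
case M0: (M == 0%N).
  by rewrite (eqP M0) invr0 mulr0.
have M0' : (0 : R) < M%:R by rewrite ltr0n lt0n M0.
case hN: (2 * (2 * ((r + 2) * r) + 2 * (2 * l0)) <= r * N)%N.
  have S1 := moment_bound hr hN.
  have S2 : #|Eset|%:R * (T * z) <= (\sum_(g in RR N r) #|bad_set r g l0|)%N%:R.
    have h : (\sum_(g in Eset) #|bad_set r g l0| <= \sum_(g in RR N r) #|bad_set r g l0|)%N.
      rewrite big_mkcond [X in (_ <= X)%N]big_mkcond; apply: leq_sum => g _.
      by rewrite !inE; case: (rreg r g) => //=; case: ifP.
    apply: le_trans (_ : (\sum_(g in Eset) #|bad_set r g l0|)%N%:R <= _); last by rewrite ler_nat.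
    rewrite natr_sum mulr_natl -sumr_const.
    by apply: ler_sum => g; rewrite inE => /andP[_ h'].
  have S3 : #|Eset|%:R * (T * z) <= (8 * r ^ 3 * (r - 1) ^ (2 * l0) * M)%N%:R.
    by apply: (le_trans S2); rewrite ler_nat.
  have e8 : (8 * r ^ 3 * (r - 1) ^ (2 * l0) * M)%N%:R = 8%:R * r%:R * (T * q ^+ 2) * M%:R :> R.
    rewrite hT -!natrM; congr (_%:R); rewrite !expnS expn0; nia.
  rewrite e8 in S3.
  have S4 : #|Eset|%:R * z <= 8%:R * r%:R * q ^+ 2 * M%:R.
    rewrite -(ler_pM2l T0).
    have -> : T * (#|Eset|%:R * z) = #|Eset|%:R * (T * z) by ring.
    have -> : T * (8%:R * r%:R * q ^+ 2 * M%:R) = 8%:R * r%:R * (T * q ^+ 2) * M%:R by ring.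
    exact: S3.
  rewrite ler_pdivlMr // mulrAC ler_pdivrMr //.
  apply: (le_trans S4); rewrite ler_pM2r // natrD natrD -[q ^+ 2]natrX -!natrM.
  by rewrite -addrA lerDl addr_ge0.
case E0: (#|Eset| == 0%N).
  by rewrite (eqP E0) mul0r.
have [g gE] : exists g, g \in Eset by apply/card_gt0P; rewrite lt0n E0.
move: gE; rewrite inE => /andP[hg hb].
have bN : (#|bad_set r g l0| <= N)%N by rewrite -[X in (_ <= X)%N]card_ord max_card.
have hN' : (r * N < 2 * (2 * ((r + 2) * r) + 2 * (2 * l0)))%N by rewrite ltnNge hN.
have sN := small_N hr hN'.
have zb : z <= (4 * r + 16)%N%:R.
  have h1 : T * z <= (4 * r + 16)%N%:R * T.
    apply: (le_trans hb); apply: (le_trans (_ : _ <= ((4 * r + 16) * (r - 1) ^ (2 * l0))%N%:R)).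
      by rewrite ler_nat (leq_trans bN).
    by rewrite natrM ler_pM2l // ltr0n; lia.
  by move: h1; rewrite [X in _ <= X]mulrC ler_pM2l.
apply: (@le_trans _ _ 1).
  by rewrite ler_pdivrMr // mul1r ler_nat.
rewrite ler_pdivlMr // mul1r (le_trans zb) // ler_nat; lia.
Qed.
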